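(* Let $n\ge 1$, $V=\mathbb F_2^n$, and let $\rho\in\mathrm{Sym}(V)\setminus\mathrm{AGL}(V)$ with $0\rho=0$. Let $\overline\rho\in\mathrm{Sym}(V\times V)$ be the map $(x,y)\overline\rho=(x+y,\ y+(x+y)\rho)$. Let $U\le V\times V$ be a subgroup, and suppose there are subgroups $A,B,C,D\le V$ and a group homomorphism $\varphi:A\to C$ such that $$U=\{(a,\ a\varphi+d)\mid a\in A,\ d\in D\}.$$ Assume that $U$ is a linear block for $\overline\rho$. Then: (1) $D\le A$; (2) $A\varphi\le A$; (3) $D\varphi\le D$.
   Context: Maps act on the right: $x\rho$ denotes the image of $x$ under $\rho$, and $fg$ means first $f$ then $g$. $\mathrm{Sym}(V)$ is the symmetric group on $V$, $\mathrm{AGL}(V)$ the group of affine permutations of $V$. A subgroup $U\le V\times V$ is a linear block for $f\in\mathrm{Sym}(V\times V)$ if for every $(v,w)\in V\times V$ there exists $(v',w')\in V\times V$ with $(U+(v,w))f=U+(v',w')$ (equivalently $(v',w')=(v,w)f$). The map $\overline\rho$ is a bijection with inverse $(x,y)\overline\rho^{-1}=(x+y+x\rho,\ y+x\rho)$. *)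

(* Defs.v *)
From HB Require Import structures.
From mathcomp Require Import all_boot all_order all_algebra all_fingroup.
Set Implicit Arguments.
Unset Strict Implicit.
Unset Printing Implicit Defensive.
Import GRing.Theory.
Local Open Scope ring_scope.

Notation V n := 'rV['F_2]_n.

Definition is_subgroup (n : nat) (A : {set V n}) : Prop :=
  0 \in A /\ (forall x y, x \in A -> y \in A -> x - y \in A).

(* phi : A -> C is a group homomorphism (phi given as a map on V, only its
   restriction to A matters). *)
Definition is_hom_on (n : nat) (A C : {set V n}) (phi : V n -> V n) : Prop :=
  (forall a, a \in A -> phi a \in C) /\
  (forall a b, a \in A -> b \in A -> phi (a + b) = phi a + phi b).

(* f : V -> V is affine: x |-> g x + b with g additive (= F_2-linear). *)
Definition is_affine (n : nat) (f : V n -> V n) : Prop :=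
  exists b : V n, forall x y, f (x + y) - b = (f x - b) + (f y - b).

Definition rhobar (n : nat) (rho : {perm V n}) (p : V n * V n) : V n * V n :=
  (p.1 + p.2, p.2 + rho (p.1 + p.2)).

Definition coset (n : nat) (U : {set V n * V n}) (p : V n * V n)
  : {set V n * V n} :=
  [set (u.1 + p.1, u.2 + p.2) | u in U].

Definition linear_block (n : nat) (U : {set V n * V n})
  (f : V n * V n -> V n * V n) : Prop :=
  forall p : V n * V n, exists q : V n * V n, f @: coset U p = coset U q.

(* Main.v *)
Require Import Defs.
From HB Require Import structures.
From mathcomp Require Import all_boot all_order all_algebra all_fingroup.
Import GRing.Theory.
Local Open Scope ring_scope.
Set Implicit Arguments.

Lemma addvv (n : nat) (v : 'rV['F_2]_n) : v + v = 0.
Proof.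
apply/rowP => i; rewrite !mxE.
by rewrite -mulr2n -mulr_natr (pchar_Fp_0 (p:=2) erefl) mulr0.
Qed.

Lemma oppv (n : nat) (v : 'rV['F_2]_n) : - v = v.
Proof. by rewrite -[LHS]add0r -(addvv v) -addrA subrr addr0. Qed.

Lemma subgD (n : nat) (A : {set 'rV['F_2]_n}) : is_subgroup A ->
  forall x y, x \in A -> y \in A -> x + y \in A.
Proof. by move=> [_ H] x y Hx Hy; have := H x y Hx Hy; rewrite oppv. Qed.

Theorem mainTheorem1 (n : nat) (hn : (1 <= n)%N) (rho : {perm 'rV['F_2]_n})
  (hrho_aff : ~ is_affine (fun x => rho x)) (hrho0 : rho 0 = 0)
  (U : {set 'rV['F_2]_n * 'rV['F_2]_n})
  (A B C D : {set 'rV['F_2]_n})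
  (hA : is_subgroup A) (hB : is_subgroup B) (hC : is_subgroup C)
  (hD : is_subgroup D)
  (phi : 'rV['F_2]_n -> 'rV['F_2]_n) (hphi : is_hom_on A C phi)
  (hU : U = [set (a, phi a + d) | a in A, d in D])
  (hblock : linear_block U (rhobar rho)) :
  D \subset A /\ phi @: A \subset A /\ phi @: D \subset D.
Proof.
have A0 : 0 \in A by case: hA.
have D0 : 0 \in D by case: hD.
have phi0 : phi 0 = 0.
  have := (proj2 hphi) 0 0 A0 A0; rewrite addr0 => H.
  by transitivity (phi 0 + phi 0); [exact: H | exact: addvv].
have inU : forall a d, a \in A -> d \in D -> (a, phi a + d) \in U.
  by move=> a d Ha Hd; rewrite hU; apply: imset2_f.
have Uinv : forall u, u \in U -> exists2 a, a \in A & exists2 d, d \in D & u = (a, phi a + d).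
  move=> u; rewrite hU => /imset2P [a d Ha Hd ->]; by exists a => //; exists d.
have UD : forall u v, u \in U -> v \in U -> (u.1 + v.1, u.2 + v.2) \in U.
  move=> u v /Uinv [a Ha [d Hd ->]] /Uinv [b Hb [e He ->]] /=.
  have -> : phi a + d + (phi b + e) = phi (a + b) + (d + e).
    by rewrite ((proj2 hphi) a b Ha Hb) -!addrA; congr (_ + _); rewrite addrCA.
  by apply: inU; apply: subgD.
have U1 : forall u, u \in U -> u.1 \in A.
  by move=> u /Uinv [a Ha [d Hd ->]].
have cU0 : Defs.coset U (0, 0) = U.
  apply/setP => u; apply/imsetP/idP => [[v Hv ->]|Hu]; first by rewrite /= !addr0; case: v Hv.
  by exists u => //; rewrite /= !addr0; case: u Hu.
have [q Hq] := hblock (0, 0).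
rewrite cU0 in Hq.
have f0 : rhobar rho (0, 0) = (0, 0) by rewrite /rhobar /= !addr0 hrho0 addr0.
have qU : q \in U.
  have U0 : ((0, 0) : 'rV['F_2]_n * 'rV['F_2]_n) \in U by have := inU 0 0 A0 D0; rewrite phi0 addr0.
  have : rhobar rho (0, 0) \in Defs.coset U q by rewrite -Hq imset_f.
  rewrite f0 => /imsetP [v Hv [e1 e2]].
  have -> : q = v.
    case: q e1 e2 {Hq} => q1 q2 /= e1 e2; case: v Hv e1 e2 => v1 v2 _ /= e1 e2.
    apply/eqP; rewrite xpair_eqE; apply/andP; split; apply/eqP.
      by rewrite -[q1]add0r e1 -addrA addvv addr0.
    by rewrite -[q2]add0r e2 -addrA addvv addr0.
  by [].
have fU : forall u, u \in U -> rhobar rho u \in U.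
  move=> u Hu; have : rhobar rho u \in Defs.coset U q by rewrite -Hq imset_f.
  move=> /imsetP [v Hv ->]; exact: UD.
have Uf : forall w, w \in U -> exists2 u, u \in U & rhobar rho u = w.
  move=> w Hw.
  have : w \in Defs.coset U q.
    apply/imsetP; exists (w.1 + q.1, w.2 + q.2); first exact: UD.
    by rewrite /= -!addrA !addvv !addr0; case: w Hw.
  by rewrite -Hq => /imsetP [u Hu ->]; exists u.
have DA : D \subset A.
  apply/subsetP => d Hd.
  have := U1 _ (fU _ (inU 0 d A0 Hd)); by rewrite /= phi0 !add0r.
split => //; split.
- apply/subsetP => x /imsetP [a Ha ->].
  have := U1 _ (fU _ (inU a 0 Ha D0)); rewrite /= addr0 => H.
  have := subgD hA H Ha; by rewrite addrAC addvv add0r.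
- apply/subsetP => x /imsetP [d Hd ->].
  have [u Hu Hf] := Uf _ (inU 0 d A0 Hd).
  have [a Ha [e He Hue]] := Uinv u Hu.
  rewrite Hue /rhobar /= in Hf; case: Hf => H1 H2.
  have ad : a = phi a + e.
    by apply/eqP; rewrite -subr_eq0 oppv; apply/eqP; exact: H1.
  rewrite H1 hrho0 addr0 -ad phi0 add0r in H2.
  rewrite -H2.
  have : phi a + e + e = phi a by rewrite -addrA addvv addr0.
  by rewrite -ad => <-; apply: subgD => //; rewrite H2.
Qed.
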